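(* For real $x$ define $$D(x)=\int_0^{\infty}\left(\frac{e^{tx}+t x\,e^{tx}}{\left(1+e^{tx}\right)^2}-2x\,e^{-t x^2}\right)dt+\int_0^{\infty}\left(2t x^3 e^{-t x^2}-\frac{2t x\,e^{2tx}}{\left(1+e^{tx}\right)^3}\right)dt .$$ Then for every $x\neq 0$ both improper integrals converge and $D(x)=0$, while for $x=0$ the first integral diverges to $+\infty$ and the second equals $0$, so $D(0)=+\infty$. That is, $D$ takes the values of the Dirac delta function: $0$ for $x\ne0$ and $+\infty$ at $x=0$. *)

(* Defs.v *)
From Stdlib Require Import Reals.
From Coquelicot Require Import Coquelicot.
Open Scope R_scope.

Definition F1 (x t : R) : R :=
  (exp (t * x) + t * x * exp (t * x)) / (1 + exp (t * x)) ^ 2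
  - 2 * x * exp (- (t * x ^ 2)).

Definition F2 (x t : R) : R :=
  2 * t * x ^ 3 * exp (- (t * x ^ 2))
  - 2 * t * x * exp (2 * t * x) / (1 + exp (t * x)) ^ 3.

Definition improper_int_0_oo (f : R -> R) (l : R) : Prop :=
  is_RInt_gen f (at_point 0) (Rbar_locally p_infty) l.

Definition improper_int_0_oo_pinfty (f : R -> R) : Prop :=
  (forall b, ex_RInt f 0 b) /\ is_lim (fun b => RInt f 0 b) p_infty p_infty.

(* Main.v *)
Require Import Defs.
From Stdlib Require Import Reals Lra.
From Coquelicot Require Import Coquelicot.
Open Scope R_scope.

Lemma Rbar_mult_pos_p c : 0 < c -> Rbar_mult c p_infty = p_infty.
Proof.
  intros Hc. unfold Rbar_mult, Rbar_mult'.
  destruct (Rle_dec 0 c) as [H|H]; [|lra].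
  destruct (Rle_lt_or_eq_dec 0 c H); [reflexivity|lra].
Qed.

Lemma lim_scal_p c : 0 < c -> is_lim (fun t => c * t) p_infty p_infty.
Proof.
  intros Hc. assert (H := is_lim_scal_l _ c p_infty p_infty (is_lim_id p_infty)).
  rewrite (Rbar_mult_pos_p c Hc) in H; exact H.
Qed.

Lemma lim_exp_neg c : 0 < c -> is_lim (fun t => exp (- (c * t))) p_infty 0.
Proof.
  intros Hc.
  apply (is_lim_comp exp (fun t => - (c * t)) p_infty 0 m_infty).
  - apply is_lim_exp_m.
  - change m_infty with (Rbar_opp p_infty). apply is_lim_opp, lim_scal_p, Hc.
  - exists 0. intros; discriminate.
Qed.

Lemma lim_uexp : is_lim (fun u => u * exp (- u)) p_infty 0.
Proof.
  apply is_lim_ext with (fun u => - ((- u) * exp (- u))).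
  { intros; ring. }
  replace (Finite 0) with (Rbar_opp (Finite 0)) by (simpl; f_equal; ring).
  apply is_lim_opp.
  apply (is_lim_comp (fun y => y * exp y) (fun u => - u) p_infty 0 m_infty).
  - apply is_lim_mul_exp_m.
  - change m_infty with (Rbar_opp p_infty). apply is_lim_opp, is_lim_id.
  - exists 0. intros; discriminate.
Qed.

Lemma lim_texp c : 0 < c -> is_lim (fun t => t * exp (- (c * t))) p_infty 0.
Proof.
  intros Hc.
  apply is_lim_ext with (fun t => / c * ((c * t) * exp (- (c * t)))).
  { intros; field; lra. }
  replace (Finite 0) with (Rbar_mult (/ c) (Finite 0)) by (simpl; f_equal; ring).
  apply is_lim_scal_l.
  apply (is_lim_comp (fun u => u * exp (- u)) (fun t => c * t) p_infty 0 p_infty).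
  - apply lim_uexp.
  - apply lim_scal_p, Hc.
  - exists 0. intros; discriminate.
Qed.

Lemma improper_antideriv (f G : R -> R) (L : R) :
  (forall t, is_derive G t (f t)) -> (forall t, continuous f t) ->
  is_lim G p_infty L -> improper_int_0_oo f (L - G 0).
Proof.
  intros HD HC HL. unfold improper_int_0_oo.
  apply is_RInt_gen_ext with (Derive G).
  - apply Filter_prod with (fun _ => True) (fun _ => True).
    + unfold at_point; easy.
    + exists 0; easy.
    + intros a b _ _ x _. apply is_derive_unique, HD.
  - apply is_RInt_gen_Derive.
    + apply Filter_prod with (fun _ => True) (fun _ => True).
      * unfold at_point; easy.
      * exists 0; easy.
      * intros a b _ _ x _. eexists; apply HD.
    + apply Filter_prod with (fun _ => True) (fun _ => True).
      * unfold at_point; easy.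
      * exists 0; easy.
      * intros a b _ _ x _. apply continuous_ext with f.
        { intros; symmetry; apply is_derive_unique, HD. }
        apply HC.
    + intros P HP. unfold filtermap, at_point. apply locally_singleton, HP.
    + exact HL.
Qed.

Definition G1 (x t : R) : R :=
  exp (t * x) / (1 + exp (t * x)) / x + t * exp (t * x) / (1 + exp (t * x))
  - ln (1 + exp (t * x)) / x + 2 * exp (- (t * x ^ 2)) / x.
Definition H (x t : R) : R :=
  t * exp (t * x) / (1 + exp (t * x)) ^ 2 - 2 * t * x * exp (- (t * x ^ 2)).

Lemma G1_der x t : x <> 0 -> is_derive (G1 x) t (F1 x t).
Proof.
  intros Hx. unfold G1, F1.
  assert (Ha := exp_pos (t * x)).
  auto_derive.
  - repeat split; lra.
  - replace (t * (x * (x * 1))) with (t * x ^ 2) by ring. field. lra.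
Qed.

Lemma H_der x t : is_derive (H x) t (F1 x t + F2 x t).
Proof.
  unfold H, F1, F2.
  assert (Ha := exp_pos (t * x)).
  auto_derive.
  - nra.
  - replace (exp (2 * t * x)) with (exp (t * x) * exp (t * x))
      by (rewrite <- exp_plus; f_equal; ring).
    replace (t * (x * (x * 1))) with (t * x ^ 2) by ring. field. lra.
Qed.

Lemma F1_cont x t : continuous (F1 x) t.
Proof.
  apply (ex_derive_continuous (F1 x)). unfold F1.
  assert (Ha := exp_pos (t * x)). auto_derive. nra.
Qed.

Lemma F2_cont x t : continuous (F2 x) t.
Proof.
  apply (ex_derive_continuous (F2 x)). unfold F2.
  assert (Ha := exp_pos (t * x)). auto_derive. nra.
Qed.

Lemma lim_mult f g y (a b : R) : is_lim f y a -> is_lim g y b ->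
  is_lim (fun z => f z * g z) y (a * b).
Proof. intros Hf Hg. exact (is_lim_mult f g y a b Hf Hg I). Qed.

Lemma lim_inv f y (a : R) : is_lim f y a -> a <> 0 ->
  is_lim (fun z => / f z) y (/ a).
Proof. intros Hf Ha. apply (is_lim_inv f y a Hf). intro E; injection E; auto. Qed.

Lemma lim_pieces c : 0 < c ->
  is_lim (fun t => / (1 + exp (- (c * t)))) p_infty (/ (1 + 0)) /\
  is_lim (fun t => ln (1 + exp (- (c * t)))) p_infty (ln (1 + 0)) /\
  is_lim (fun t => t * exp (- (c * t)) * / ((1 + exp (- (c * t))) * (1 + exp (- (c * t)))))
     p_infty (0 * / ((1 + 0) * (1 + 0))).
Proof.
  intros Hc.
  assert (HE := lim_exp_neg c Hc).
  assert (H1 : is_lim (fun t => 1 + exp (- (c * t))) p_infty (1 + 0)).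
  { apply is_lim_plus'; [apply is_lim_const | exact HE]. }
  split; [|split].
  - apply lim_inv; [exact H1|lra].
  - apply is_lim_comp_continuous with (f := fun t => 1 + exp (- (c * t))); [exact H1|].
    apply (ex_derive_continuous ln). auto_derive. lra.
  - apply lim_mult; [apply lim_texp, Hc|].
    apply lim_inv; [apply lim_mult; exact H1|lra].
Qed.

Lemma G1_lim x : x <> 0 -> exists L : R, is_lim (G1 x) p_infty L.
Proof.
  intros Hx.
  assert (Hx2 : 0 < x ^ 2) by (apply pow2_gt_0; exact Hx).
  assert (HG := lim_exp_neg (x ^ 2) Hx2).
  destruct (Rlt_or_le 0 x) as [Hp|Hn].
  - destruct (lim_pieces x Hp) as [P1 [P2 P3]].
    eexists.
    apply is_lim_ext with (f := fun t =>
      / x * / (1 + exp (- (x * t))) - (t * exp (- (x * t))) * / (1 + exp (- (x * t)))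
      - / x * ln (1 + exp (- (x * t))) + 2 / x * exp (- (x ^ 2 * t))).
    { intros t. unfold G1.
      assert (Ha := exp_pos (t * x)).
      assert (Ea : exp (-(x*t)) = / exp (t*x)) by (rewrite <- exp_Ropp; f_equal; ring).
      assert (Eg : exp (-(x^2*t)) = exp (-(t*x^2))) by (f_equal; ring).
      assert (Hb : 0 < / exp (t * x)) by (apply Rinv_0_lt_compat; lra).
      assert (Ln : ln (1+exp(t*x)) = t*x + ln(1+ /exp(t*x))).
      { replace (1+exp(t*x)) with (exp(t*x)*(1+/exp(t*x))) by (field; lra).
        rewrite ln_mult, ln_exp; [ring|lra|lra]. }
      rewrite Ea, Eg, Ln. field. repeat split; lra. }
    eapply is_lim_plus'.
    + eapply is_lim_minus'.
      * eapply is_lim_minus'.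
        -- apply lim_mult; [apply is_lim_const | exact P1].
        -- apply lim_mult; [apply lim_texp, Hp | exact P1].
      * apply lim_mult; [apply is_lim_const | exact P2].
    + apply lim_mult; [apply is_lim_const | exact HG].
  - assert (Hc : 0 < - x) by lra.
    destruct (lim_pieces (- x) Hc) as [P1 [P2 P3]].
    eexists.
    apply is_lim_ext with (f := fun t =>
      / x * (exp (- (- x * t)) * / (1 + exp (- (- x * t))))
      + (t * exp (- (- x * t))) * / (1 + exp (- (- x * t)))
      - / x * ln (1 + exp (- (- x * t))) + 2 / x * exp (- (x ^ 2 * t))).
    { intros t. unfold G1.
      assert (Ha := exp_pos (t * x)).
      assert (Ea : exp (-(-x*t)) = exp (t*x)) by (f_equal; ring).
      assert (Eg : exp (-(x^2*t)) = exp (-(t*x^2))) by (f_equal; ring).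
      rewrite Ea, Eg. field. repeat split; lra. }
    eapply is_lim_plus'.
    + eapply is_lim_minus'.
      * eapply is_lim_plus'.
        -- apply lim_mult; [apply is_lim_const | ].
           apply lim_mult; [apply lim_exp_neg, Hc | exact P1].
        -- apply lim_mult; [apply lim_texp, Hc | exact P1].
      * apply lim_mult; [apply is_lim_const | exact P2].
    + apply lim_mult; [apply is_lim_const | exact HG].
Qed.

Lemma H_lim x : x <> 0 -> is_lim (H x) p_infty 0.
Proof.
  intros Hx.
  assert (Hx2 : 0 < x ^ 2) by (apply pow2_gt_0; exact Hx).
  assert (HG : is_lim (fun t => 2 * x * (t * exp (- (x ^ 2 * t)))) p_infty (2 * x * 0)).
  { apply lim_mult; [apply is_lim_const | apply lim_texp, Hx2]. }
  destruct (Rlt_or_le 0 x) as [Hp|Hn].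
  - destruct (lim_pieces x Hp) as [P1 [P2 P3]].
    replace (Finite 0) with (Finite (0 * / ((1 + 0) * (1 + 0)) - 2 * x * 0))
      by (f_equal; field).
    apply is_lim_ext with (f := fun t =>
      t * exp (- (x * t)) * / ((1 + exp (- (x * t))) * (1 + exp (- (x * t))))
      - 2 * x * (t * exp (- (x ^ 2 * t)))).
    { intros t. unfold H.
      assert (Ha := exp_pos (t * x)).
      assert (Ea : exp (-(x*t)) = / exp (t*x)) by (rewrite <- exp_Ropp; f_equal; ring).
      assert (Eg : exp (-(x^2*t)) = exp (-(t*x^2))) by (f_equal; ring).
      rewrite Ea, Eg. field. repeat split; try lra; try nra. }
    apply is_lim_minus'; [exact P3 | exact HG].
  - assert (Hc : 0 < - x) by lra.
    destruct (lim_pieces (- x) Hc) as [P1 [P2 P3]].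
    replace (Finite 0) with (Finite (0 * / ((1 + 0) * (1 + 0)) - 2 * x * 0))
      by (f_equal; field).
    apply is_lim_ext with (f := fun t =>
      t * exp (- (- x * t)) * / ((1 + exp (- (- x * t))) * (1 + exp (- (- x * t))))
      - 2 * x * (t * exp (- (x ^ 2 * t)))).
    { intros t. unfold H.
      assert (Ha := exp_pos (t * x)).
      assert (Ea : exp (-(-x*t)) = exp (t*x)) by (f_equal; ring).
      assert (Eg : exp (-(x^2*t)) = exp (-(t*x^2))) by (f_equal; ring).
      rewrite Ea, Eg. field. nra. }
    apply is_lim_minus'; [exact P3 | exact HG].
Qed.

Lemma F1_zero t : F1 0 t = / 4.
Proof.
  unfold F1. rewrite Rmult_0_r, exp_0. field.
Qed.

Lemma F2_zero (t : R) : F2 0 t = 0.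
Proof. unfold F2. unfold Rdiv. ring. Qed.

Theorem mainTheorem7 :
  (forall x : R, x <> 0 ->
     exists I1 I2 : R,
       improper_int_0_oo (F1 x) I1 /\ improper_int_0_oo (F2 x) I2 /\
       I1 + I2 = 0)
  /\ improper_int_0_oo_pinfty (F1 0)
  /\ improper_int_0_oo (F2 0) 0.
Proof.
  split; [|split].
  - intros x Hx. destruct (G1_lim x Hx) as [L HL].
    exists (L - G1 x 0), ((0 - L) - (H x 0 - G1 x 0)).
    split; [|split].
    + apply improper_antideriv; [intros; apply G1_der, Hx | apply F1_cont | exact HL].
    + apply (improper_antideriv (F2 x) (fun t => H x t - G1 x t)).
      * intros t. replace (F2 x t) with ((F1 x t + F2 x t) - F1 x t) by ring.
        apply (is_derive_minus (H x) (G1 x)); [apply H_der | apply G1_der, Hx].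
      * apply F2_cont.
      * apply (is_lim_minus' (H x) (G1 x) p_infty 0 L); [apply H_lim, Hx | exact HL].
    + unfold H. rewrite !Rmult_0_l. unfold Rdiv. rewrite Rmult_0_l. ring.
  - split.
    + intros b. apply ex_RInt_ext with (fun _ => / 4).
      { intros; symmetry; apply F1_zero. }
      apply ex_RInt_const.
    + apply is_lim_ext with (fun b => / 4 * b).
      { intros b. rewrite (RInt_ext _ (fun _ => / 4)).
        - rewrite RInt_const. unfold scal; simpl; unfold mult; simpl. ring.
        - intros; apply F1_zero. }
      assert (Hq : 0 < / 4) by lra.
      assert (K := is_lim_scal_l _ (/ 4) p_infty p_infty (is_lim_id p_infty)).
      rewrite (Rbar_mult_pos_p _ Hq) in K. exact K.
  - replace 0 with (0 - 0) at 2 by ring.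
    apply (improper_antideriv (F2 0) (fun _ => 0) 0).
    + intros t. rewrite F2_zero. auto_derive; auto.
    + apply F2_cont.
    + apply is_lim_const.
Qed.
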